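(* Let $a\in\mathbb{R}$, $\lambda>0$, and let $w$ be any solution of Airy's equation $w''(x)=xw(x)$. Define $$\mathcal{K}(a,\lambda;x,y,z)=\exp\big((\lambda/2)^{1/2}xyz\big)\,w\Big(\frac{\lambda^{1/3}}{2}(x^2+y^2+z^2)+\frac{a}{\lambda^{2/3}}\Big).$$ Then $$H(x)\mathcal{K}(x,y,z)=H(y)\mathcal{K}(x,y,z)=H(z)\mathcal{K}(x,y,z),$$ where $H(x)=-\frac{\partial^2}{\partial x^2}+ax^2+\frac{\lambda}{2}x^4$ acts in the variable $x$, and similarly for $H(y)$, $H(z)$. *)

(* Defs.v *)
From Stdlib Require Import Reals.
From Coquelicot Require Import Coquelicot.
Open Scope R_scope.

Definition airy_solution (w : R -> R) : Prop :=
  exists w' : R -> R, forall x : R,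
    is_derive w x (w' x) /\ is_derive w' x (x * w x).

Definition Kfun (w : R -> R) (a lam x y z : R) : R :=
  exp (sqrt (lam / 2) * x * y * z) *
  w (Rpower lam (1/3) / 2 * (x ^ 2 + y ^ 2 + z ^ 2) + a / Rpower lam (2/3)).

Definition Hop (a lam : R) (f : R -> R) (t : R) : R :=
  - Derive (Derive f) t + a * t ^ 2 * f t + lam / 2 * t ^ 4 * f t.

(* Main.v *)
Require Import Defs.
From Stdlib Require Import Reals Lra FunctionalExtensionality.
From Coquelicot Require Import Coquelicot.
Open Scope R_scope.
Lemma d2_lemma (f g : R -> R) (x v : R) :
  (forall t, is_derive f t (g t)) -> is_derive g x v -> Derive (Derive f) x = v.
Proof.
  intros H1 H2.
  assert (E : Derive f = g).
  { apply functional_extensionality; intro t. apply is_derive_unique, H1. }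
  rewrite E. apply is_derive_unique, H2.
Qed.

Lemma mul_der (f g : R -> R) x df dg v :
  is_derive f x df -> is_derive g x dg -> v = df * g x + f x * dg ->
  is_derive (fun t => f t * g t) x v.
Proof.
  intros H1 H2 ->. apply (is_derive_mult f g x df dg H1 H2). intros; apply Rmult_comm.
Qed.

Lemma plus_der (f g : R -> R) x df dg v :
  is_derive f x df -> is_derive g x dg -> v = df + dg ->
  is_derive (fun t => f t + g t) x v.
Proof. intros H1 H2 ->. apply (is_derive_plus f g x df dg H1 H2). Qed.

Lemma comp_der (f g : R -> R) x df dg v :
  is_derive f (g x) df -> is_derive g x dg -> v = dg * df ->
  is_derive (fun t => f (g t)) x v.
Proof. intros H1 H2 ->. apply (is_derive_comp f g x df dg H1 H2). Qed.

Lemma gen (w w' : R -> R) (hw : forall x, is_derive w x (w' x) /\ is_derive w' x (x * w x))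
  (c k b p q x : R) :
  Derive (Derive (fun t => exp (c*t*p*q) * w (k*(t^2+p^2+q^2)+b))) x =
  exp (c*x*p*q) * ((c*p*q)^2 * w (k*(x^2+p^2+q^2)+b) + 4*c*p*q*k*x*w' (k*(x^2+p^2+q^2)+b)
    + 4*k^2*x^2 * (k*(x^2+p^2+q^2)+b) * w (k*(x^2+p^2+q^2)+b)
    + 2*k* w' (k*(x^2+p^2+q^2)+b)).
Proof.
  set (u := fun t => k*(t^2+p^2+q^2)+b).
  change (k*(x^2+p^2+q^2)+b) with (u x).
  change (fun t => exp (c*t*p*q) * w (k*(t^2+p^2+q^2)+b)) with
    (fun t => exp (c*t*p*q) * w (u t)).
  assert (Hu : forall t, is_derive u t (2*k*t)).
  { intro t. unfold u. auto_derive; [exact I| ring]. }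
  assert (He : forall t, is_derive (fun t => exp (c*t*p*q)) t (c*p*q*exp (c*t*p*q))).
  { intro t. auto_derive; [exact I| ring]. }
  assert (Hw : forall t, is_derive (fun t => w (u t)) t (2*k*t * w' (u t))).
  { intro t. apply (comp_der w u t (w' (u t)) (2*k*t)); [apply hw | apply Hu | ring]. }
  assert (Hw' : forall t, is_derive (fun t => w' (u t)) t (2*k*t * (u t * w (u t)))).
  { intro t. apply (comp_der w' u t (u t * w (u t)) (2*k*t)); [apply hw | apply Hu | ring]. }
  apply (d2_lemma _ (fun t => (c*p*q)*exp (c*t*p*q) * w (u t) + exp (c*t*p*q) * ((2*k*t) * w' (u t)))).
  - intro t. eapply (mul_der (fun t => exp (c*t*p*q)) (fun t => w (u t)) t _ _ _ (He t) (Hw t)). ring.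
  - eapply (plus_der (fun t => (c*p*q)*exp (c*t*p*q) * w (u t))
                    (fun t => exp (c*t*p*q) * ((2*k*t) * w' (u t)))).
    + eapply (mul_der (fun t => (c*p*q)*exp (c*t*p*q)) (fun t => w (u t))).
      * eapply (mul_der (fun _ => c*p*q) (fun t => exp (c*t*p*q)) x 0 _ _ (is_derive_const _ x) (He x)). reflexivity.
      * apply Hw.
      * reflexivity.
    + eapply (mul_der (fun t => exp (c*t*p*q)) (fun t => (2*k*t) * w' (u t))).
      * apply He.
      * eapply (mul_der (fun t => 2*k*t) (fun t => w' (u t))).
        -- auto_derive; [exact I | reflexivity].
        -- apply Hw'.
        -- reflexivity.
      * reflexivity.
    + ring.
Qed.

Theorem proposition1 (a lam : R) (w : R -> R) (hlam : 0 < lam)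
  (hw : airy_solution w) (x y z : R) :
  Hop a lam (fun t => Kfun w a lam t y z) x = Hop a lam (fun t => Kfun w a lam x t z) y /\
  Hop a lam (fun t => Kfun w a lam x t z) y = Hop a lam (fun t => Kfun w a lam x y t) z.
Proof.
  destruct hw as [w' hw].
  unfold Hop, Kfun.
  set (c := sqrt (lam/2)). set (k := Rpower lam (1/3) / 2). set (b := a / Rpower lam (2/3)).
  assert (Ey : (fun t => exp (c*x*t*z) * w (k*(x^2+t^2+z^2)+b)) =
               (fun t => exp (c*t*x*z) * w (k*(t^2+x^2+z^2)+b))).
  { apply functional_extensionality; intro t. f_equal; [f_equal|f_equal]; ring. }
  assert (Ez : (fun t => exp (c*x*y*t) * w (k*(x^2+y^2+t^2)+b)) =
               (fun t => exp (c*t*x*y) * w (k*(t^2+x^2+y^2)+b))).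
  { apply functional_extensionality; intro t. f_equal; [f_equal|f_equal]; ring. }
  rewrite Ey, Ez, !(gen w w' hw).
  assert (E1 : c*y*x*z = c*x*y*z) by ring. assert (E2 : c*z*x*y = c*x*y*z) by ring.
  assert (U1 : k*(y^2+x^2+z^2)+b = k*(x^2+y^2+z^2)+b) by ring.
  assert (U2 : k*(z^2+x^2+y^2)+b = k*(x^2+y^2+z^2)+b) by ring.
  rewrite E1, E2, U1, U2.
  set (E := exp (c*x*y*z)). set (W := w (k*(x^2+y^2+z^2)+b)). set (W' := w' (k*(x^2+y^2+z^2)+b)).
  assert (Hc : c*c = lam/2) by (apply sqrt_sqrt; lra).
  assert (Hk : 4*k^2 = Rpower lam (2/3)).
  { unfold k. replace (2/3) with (1/3+1/3) by field. rewrite Rpower_plus. field. }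
  assert (Hk3 : 4*k^2*k = lam/2).
  { rewrite Hk. unfold k. replace (Rpower lam (2/3) * (Rpower lam (1/3)/2)) with
      (Rpower lam (2/3 + 1/3) / 2) by (rewrite Rpower_plus; field).
    replace (2/3+1/3) with 1 by field. rewrite Rpower_1; lra. }
  assert (Hb : 4*k^2*b = a).
  { rewrite Hk. unfold b. field. unfold Rpower. apply Rgt_not_eq, exp_pos. }
  clearbody E W W' c k b.
  split; apply Rminus_diag_uniq.
  - transitivity (E*W*((c*c-lam/2)*(-(y^2*z^2-x^2*z^2)) + (4*k^2*k-lam/2)*(-((x^2+y^2+z^2)*(x^2-y^2)))
       + (4*k^2*b-a)*(-(x^2-y^2)))); [ring|].
    rewrite Hc, Hk3, Hb. ring.
  - transitivity (E*W*((c*c-lam/2)*(-(x^2*z^2-x^2*y^2)) + (4*k^2*k-lam/2)*(-((x^2+y^2+z^2)*(y^2-z^2)))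
       + (4*k^2*b-a)*(-(y^2-z^2)))); [ring|].
    rewrite Hc, Hk3, Hb. ring.
Qed.
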